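(* Let $p$ be a polynomial of degree at most $2$, $s$ a polynomial of degree at most $1$, and $\eta$ a polynomial of degree exactly $1$ with root $\xi$. Put $$\kappa_0=p(\xi)\eta''(\xi)+\tfrac12p'(\xi)\eta'(\xi)-s(\xi)\eta'(\xi),\qquad \kappa_1=2p(\xi)\eta'(\xi),$$ and assume $(\kappa_0,\kappa_1)\neq(0,0)$. Let $\widehat T$ be the natural-form operator $$\widehat T[y]=p\,y''+\Big(\frac{p'}{2}+s-\frac{2p\eta'}{\eta}\Big)y'+\Big(\frac{p\eta''}{\eta}+\Big(\frac{p'}{2}-s\Big)\frac{\eta'}{\eta}\Big)y,$$ and suppose there is $d\in\{0,1\}$ such that for each $j\in\mathbb N_0\setminus\{d\}$ there is a polynomial eigenfunction $\widehat y_j$ of $\widehat T$ of degree exactly $j$. For $n\ge1$ let $\mathcal E_n=\operatorname{span}\{\widehat y_j: 0\le j\le n,\ j\neq d\}$ and $$\mathcal F_n=\{P\in\mathcal P_n:\ \kappa_1P'(\xi)-\kappa_0P(\xi)=0\},$$ where $\mathcal P_n$ is the space of (real) polynomials of degree at most $n$. Then $\mathcal E_n=\mathcal F_n$ for all $n\ge1$.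
   Context: The condition $\kappa_1P'(\xi)-\kappa_0P(\xi)=0$, i.e. $\big[2p\eta'P'-\big(p\eta''+\tfrac12p'\eta'-s\eta'\big)P\big]\big|_{x=\xi}=0$, is called the exceptional condition, and $\xi$ the exceptional root. This is the $X_1$ (codimension one) situation, covering the $X_1$ Laguerre polynomials of Types I, II (missing degree $d=0$), Type III (missing degree $d=1$), and the $X_1$ Jacobi polynomials ($d=0$). *)

(* Defs.v *)
From HB Require Import structures.
From mathcomp Require Import all_boot all_order all_algebra.
Set Implicit Arguments. Unset Strict Implicit. Unset Printing Implicit Defensive.
Import Order.TTheory GRing.Theory Num.Theory.
Local Open Scope ring_scope.

Definition kappa0 (R : realFieldType) (p s eta : {poly R}) (xi : R) : R :=
  p.[xi] * (eta^`(2)).[xi] + (p^`()).[xi] / 2 * (eta^`()).[xi]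
  - s.[xi] * (eta^`()).[xi].

Definition kappa1 (R : realFieldType) (p eta : {poly R}) (xi : R) : R :=
  2 * p.[xi] * (eta^`()).[xi].

(* The natural-form operator T^[y], evaluated at a point x (meaningful where
   eta(x) <> 0). *)
Definition That (R : realFieldType) (p s eta y : {poly R}) (x : R) : R :=
  p.[x] * (y^`(2)).[x]
  + ((p^`()).[x] / 2 + s.[x] - 2 * p.[x] * (eta^`()).[x] / eta.[x]) * (y^`()).[x]
  + (p.[x] * (eta^`(2)).[x] / eta.[x]
     + ((p^`()).[x] / 2 - s.[x]) * (eta^`()).[x] / eta.[x]) * y.[x].

Definition is_eigenfun (R : realFieldType) (p s eta y : {poly R}) : Prop :=
  exists lambda : R, forall x : R, eta.[x] != 0 -> That p s eta y x = lambda * y.[x].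

Definition in_En (R : realFieldType) (yh : nat -> {poly R}) (d n : nat)
  (P : {poly R}) : Prop :=
  exists c : nat -> R, P = \sum_(j < n.+1 | (j : nat) != d) c j *: yh j.

Definition in_Fn (R : realFieldType) (p s eta : {poly R}) (xi : R) (n : nat)
  (P : {poly R}) : Prop :=
  (size P <= n.+1)%N /\ kappa1 p eta xi * (P^`()).[xi] - kappa0 p s eta xi * P.[xi] = 0.

(* Main.v *)
Require Import Defs.
From HB Require Import structures.
From mathcomp Require Import all_boot all_order all_algebra.
Import Order.TTheory GRing.Theory Num.Theory.
Local Open Scope ring_scope.
Set Implicit Arguments. Unset Strict Implicit.

Lemma poly_zero_off (R : realFieldType) (G : {poly R}) (xi : R) :
  (forall x, x != xi -> G.[x] = 0) -> G = 0.
Proof.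
move=> H; apply/eqP; apply/negPn/negP => G0.
set rs := [seq xi + (i.+1)%:R | i <- iota 0 (size G)].
suff : (size rs < size G)%N by rewrite size_map size_iota ltnn.
apply: max_poly_roots G0 _ _.
- apply/allP => x /mapP [i _ ->]; apply/rootP; apply: H.
  by rewrite -subr_eq0 addrC addKr pnatr_eq0.
- rewrite map_inj_uniq ?iota_uniq // => i j /addrI /eqP.
  by rewrite eqr_nat eqSS => /eqP.
Qed.

Lemma size2_form (R : realFieldType) (q : {poly R}) :
  (size q <= 2)%N -> q = q`_1 *: 'X + (q`_0)%:P.
Proof.
move=> hq; apply/polyP => i.
rewrite coefD coefZ coefX coefC.
case: i => [|[|i]] /=; rewrite ?mulr0 ?mulr1 ?add0r ?addr0 //.
by rewrite nth_default // (leq_trans hq).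
Qed.

Lemma size2_deriv (R : realFieldType) (q : {poly R}) x :
  (size q <= 2)%N -> (q^`()).[x] = q`_1.
Proof.
move=> hq; rewrite {1}(size2_form hq) derivD derivZ derivX derivC addr0.
by rewrite hornerZ hornerE mulr1.
Qed.
From mathcomp Require Import ring lra.

Lemma eta_form (R : realFieldType) (eta : {poly R}) xi :
  size eta = 2%N -> root eta xi -> exists2 c, c != 0 & eta = c *: ('X - xi%:P).
Proof.
move=> hs /factor_theorem [q hq].
have q0 : q != 0 by apply/eqP => q0; move: hs; rewrite hq q0 mul0r size_poly0.
move: hs; rewrite hq size_Mmonic ?monicXsubC // size_XsubC addn2 /= => /eqP.
case/size_poly1P => c c0 ->; exists c => //; by rewrite mul_polyC.
Qed.

Lemma eigen_F (R : realFieldType) (p s eta y : {poly R}) xi c :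
  c != 0 -> eta = c *: ('X - xi%:P) -> is_eigenfun p s eta y ->
  kappa1 p eta xi * (y^`()).[xi] - kappa0 p s eta xi * y.[xi] = 0.
Proof.
move=> c0 he [lam H].
have e1 : eta^`() = c%:P by rewrite he derivZ derivXsubC alg_polyC.
have e2 : eta^`(2) = 0 by rewrite derivSn e1 /= derivC.
pose G := c *: ('X - xi%:P) * (p * y^`(2) + ((2^-1) *: p^`() + s) * y^`() - lam *: y)
  - (2*c) *: (p * y^`()) + c *: (((2^-1) *: p^`() - s) * y).
have G0 : G = 0.
  apply: (@poly_zero_off _ _ xi) => x hx.
  have ex : eta.[x] != 0 by rewrite he hornerZ !hornerE mulf_eq0 negb_or c0 subr_eq0.
  have := H x ex; rewrite /That e1 e2 he !hornerE => Hx.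
  rewrite /G -Hx /=.
  have hx' : x - xi != 0 by rewrite subr_eq0.
  by field; rewrite hx' c0.
have := congr1 (fun q => q.[xi]) G0.
rewrite /G !(hornerD, hornerN, hornerM, hornerZ, hornerC, hornerX, hornerXsubC) /kappa1 /kappa0 e1 e2 !(hornerD, hornerN, hornerM, hornerZ, hornerC, hornerX, hornerXsubC) subrr => h.
rewrite mulr0 add0r; move/(congr1 -%R): h; rewrite oppr0 => <-; by field.
Qed.

Section Cl.
Variables (R : realFieldType) (yh : nat -> {poly R}) (d n : nat).

Lemma En0 : in_En yh d n 0.
Proof. by exists (fun _ => 0); rewrite big1 // => j _; rewrite scale0r. Qed.

Lemma EnD P Q : in_En yh d n P -> in_En yh d n Q -> in_En yh d n (P + Q).
Proof.
move=> [c1 ->] [c2 ->]; exists (fun j => c1 j + c2 j).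
by rewrite -big_split; apply: eq_bigr => j _; rewrite scalerDl.
Qed.

Lemma EnZ a P : in_En yh d n P -> in_En yh d n (a *: P).
Proof.
move=> [c ->]; exists (fun j => a * c j).
by rewrite scaler_sumr; apply: eq_bigr => j _; rewrite scalerA.
Qed.

Lemma Enyh k : (k <= n)%N -> k != d -> in_En yh d n (yh k).
Proof.
move=> kn kd; exists (fun j => if j == k then 1 else 0).
have kn' : (k < n.+1)%N by [].
rewrite (bigD1 (Ordinal kn')) //= eqxx scale1r big1 ?addr0 // => j /andP [_ hj].
by move: hj; rewrite -(inj_eq val_inj) /= => hj; rewrite ifN ?scale0r.
Qed.

Variables (p s eta : {poly R}) (xi : R).

Lemma FnD P Q : in_Fn p s eta xi n P -> in_Fn p s eta xi n Q -> in_Fn p s eta xi n (P + Q).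
Proof.
move=> [s1 h1] [s2 h2]; split.
  by apply: leq_trans (size_add _ _) _; rewrite geq_max s1 s2.
by rewrite derivD !hornerD; move: h1 h2; set k1 := kappa1 _ _ _; set k0 := kappa0 _ _ _ _ => h1 h2; rewrite -[0]addr0 -{1}h1 -h2; ring.
Qed.

Lemma FnZ a P : in_Fn p s eta xi n P -> in_Fn p s eta xi n (a *: P).
Proof.
move=> [s1 h1]; split.
  by apply: leq_trans (size_scale_leq _ _) _.
rewrite derivZ !hornerZ; move: h1; set k1 := kappa1 _ _ _; set k0 := kappa0 _ _ _ _ => h1.
by rewrite -[RHS](mulr0 a) -h1; ring.
Qed.

End Cl.

Lemma size_drop_top (R : realFieldType) (q : {poly R}) m :
  (size q <= m.+1)%N -> q`_m = 0 -> (size q <= m)%N.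
Proof.
move=> h1 h2; rewrite leqNgt; apply/negP => h3.
have e : size q = m.+1 by apply/eqP; rewrite eqn_leq h1 h3.
have : lead_coef q = 0 by rewrite lead_coefE e.
by move/eqP; rewrite lead_coef_eq0 => /eqP q0; move: e; rewrite q0 size_poly0.
Qed.

Unset Implicit Arguments.
Theorem lemma4p1 (R : realFieldType) (p s eta : {poly R}) (xi : R)
  (d : nat) (yh : nat -> {poly R})
  (hp : (size p <= 3)%N) (hs : (size s <= 2)%N)
  (heta : size eta = 2%N) (hxi : root eta xi)
  (hkappa : (kappa0 p s eta xi, kappa1 p eta xi) != (0, 0))
  (hd : (d <= 1)%N)
  (hy : forall j : nat, j != d ->
          size (yh j) = j.+1 /\ is_eigenfun p s eta (yh j)) :
  forall n : nat, (1 <= n)%N ->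
    forall P : {poly R}, in_En yh d n P <-> in_Fn p s eta xi n P.
Proof.
move=> n n1 P.
have [c c0 he] := eta_form heta hxi.
have yF : forall j, j != d -> kappa1 p eta xi * ((yh j)^`()).[xi]
    - kappa0 p s eta xi * (yh j).[xi] = 0.
  by move=> j jd; exact: (eigen_F c0 he (hy j jd).2).
have yFn : forall j, (j <= n)%N -> j != d -> in_Fn p s eta xi n (yh j).
  by move=> j jn jd; split; [rewrite (hy j jd).1 | exact: yF].
have fwd : forall Q, in_En yh d n Q -> in_Fn p s eta xi n Q.
  move=> Q [cc ->]; apply: (big_ind (in_Fn p s eta xi n)).
  - by split; rewrite ?size_poly0 // deriv0 !horner0 !mulr0 subrr.
  - exact: FnD.
  - by move=> j jd; apply: FnZ; apply: yFn => //; rewrite -ltnS.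
have red : forall k, (k <= n)%N -> forall P0 : {poly R}, (size P0 <= k.+1)%N ->
    exists Q, in_En yh d n Q /\ (size (P0 - Q)%R <= d.+1)%N.
  elim => [|k IH] kn P0 hP.
    by exists 0; split; [exact: En0 | rewrite subr0 (leq_trans hP)].
  case: (leqP k.+1 d) => hkd.
    by exists 0; split; [exact: En0 | rewrite subr0 (leq_trans hP)].
  have kd : k.+1 != d by rewrite gtn_eqF.
  have [sy _] := hy _ kd.
  set y := yh k.+1; set a := P0`_k.+1 / lead_coef y.
  have ly : lead_coef y != 0 by rewrite lead_coef_eq0 -size_poly_gt0 sy.
  have hP' : (size (P0 - a *: y)%R <= k.+1)%N.
    apply: size_drop_top.
      apply: leq_trans (size_add _ _) _; rewrite size_polyN geq_max hP /=.
      by apply: leq_trans (size_scale_leq _ _) _; rewrite sy.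
    move: ly; rewrite coefB coefZ /a lead_coefE sy /= => ly.
    by field.
  have [Q [hQ hs']] := IH (ltnW kn) _ hP'.
  exists (Q + a *: y); split; first exact: (EnD hQ (EnZ a (Enyh yh kn kd))).
  by rewrite opprD addrA addrAC.
split; first exact: fwd.
move=> hF; have [Q [hQ hr]] := red n (leqnn n) P hF.1.
have rF : in_Fn p s eta xi n (P - Q).
  by rewrite -scaleN1r; apply: FnD => //; apply: FnZ; exact: fwd.
suff rE : in_En yh d n (P - Q).
  by rewrite -(subrK Q P); apply: EnD.
move: hkappa; rewrite xpair_eqE negb_and => hk.
move: rF => [_]; move: hr.
set k0 := kappa0 p s eta xi in yF hk *; set k1 := kappa1 p eta xi in yF hk *; set r := P - Q.
case: d hd hy yF yFn fwd red hQ => [|[|//]] _ hy yF yFn fwd red hQ hr hrF.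
-
  have re : r = (r`_0)%:P by apply: size1_polyC.
  have [sy1 _] := hy 1%N isT.
  have h1 := yF 1%N isT.
  rewrite (size2_deriv _ (eq_leq sy1)) in h1.
  have l1 : (yh 1%N)`_1 != 0.
    have -> : (yh 1%N)`_1 = lead_coef (yh 1%N) by rewrite lead_coefE sy1.
    by rewrite lead_coef_eq0 -size_poly_gt0 sy1.
  have k0n : k0 != 0.
    apply/negP => /eqP k00; move: h1 hk; rewrite k00 mul0r subr0 eqxx /= => /eqP.
    by rewrite mulf_eq0 (negbTE l1) orbF => ->.
  move: hrF; rewrite re derivC horner0 hornerC mulr0 sub0r.
  move/eqP; rewrite oppr_eq0 mulf_eq0 (negbTE k0n) /= => /eqP ->.
  exact: En0.
-
  have [sy0 _] := hy 0%N isT.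
  have [b b0 yb] : exists2 b, b != 0 & yh 0%N = b%:P by apply/size_poly1P; rewrite sy0.
  have := yF 0%N isT; rewrite yb.
  rewrite derivC horner0 hornerC mulr0 sub0r => /eqP; rewrite oppr_eq0 mulf_eq0 (negbTE b0) orbF => k00.
  have k1n : k1 != 0 by move: hk; rewrite k00.
  move: hrF; rewrite (eqP k00) mul0r subr0 (size2_deriv _ hr) => /eqP.
  rewrite mulf_eq0 (negbTE k1n) /= => /eqP r1.
  have -> : r = (r`_0 / b) *: yh 0%N.
    by rewrite {1}(size2_form hr) r1 scale0r add0r yb scale_polyC divfK.
  by apply: EnZ; apply: Enyh.
Qed.
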